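(* Let $\Phi_M,\Phi_N$ be measurement channels corresponding to two $2$-outcome qubit POVMs ($d=2$) $M=\{M_0,M_1\}$ and $N=\{N_0,N_1\}$ with $M_1\neq N_1$. The pair $\Phi_M,\Phi_N$ is a Maximal Entanglement Worst Case pair if and only if $\det(M_0-N_0)=0$.
   Context: The measurement channel of a POVM $M$ is $\Phi_M(\rho)=\sum_i\operatorname{Tr}(\rho M_i)\,|i\rangle\langle i|$. With $\Delta_\Phi=\Phi_M-\Phi_N$, Choi operator $J(\mathcal{S})=\sum_{ij}\mathcal{S}(|i\rangle\langle j|)\otimes|i\rangle\langle j|$, ME-norm $\|\mathcal{S}\|_{\mathrm{ME}}=\|J(\mathcal{S})/d\|_1$ and diamond norm $\|\mathcal{S}\|_\diamond=\max_{\rho_{AA'}}\|(\mathcal{S}\otimes I_{A'})\rho_{AA'}\|_1$, the pair is called Maximal Entanglement Worst Case (MEWC) if $\|\Delta_\Phi\|_\diamond=d\|\Delta_\Phi\|_{\mathrm{ME}}$, i.e. a maximally entangled input is maximally suboptimal for discriminating the two channels with uniform priors. *)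

(* Defs.v *)
From HB Require Import structures.
From mathcomp Require Import all_boot all_order all_algebra.
From mathcomp Require Import sesquilinear spectral.
From mathcomp Require Import mxtens.

Set Implicit Arguments.
Unset Strict Implicit.
Unset Printing Implicit Defensive.

Import Order.TTheory GRing.Theory Num.Theory.
Local Open Scope ring_scope.

(* Complex scalars: an arbitrary numClosedFieldType C (e.g. algC, or R[i]
   for a real closed field R).  Matrices over C, conjugate transpose A ^t*. *)

Section QInfo.
Variable C : numClosedFieldType.

Definition adjmx m n (A : 'M[C]_(m, n)) : 'M[C]_(n, m) := map_mx Num.conj A^T.

Definition psd n (A : 'M[C]_n) : Prop :=
  forall v : 'cV[C]_n, 0 <= (adjmx v *m A *m v) 0 0.

Definition density n (rho : 'M[C]_n) : Prop := psd rho /\ \tr rho = 1.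

Definition POVM d k (M : 'I_k -> 'M[C]_d) : Prop :=
  (forall i, psd (M i)) /\ \sum_(i < k) M i = 1%:M.

(* trace norm ||X||_1 = Tr sqrt(X^* X); the square root of the psd matrix
   X^* X is taken through its spectral decomposition (sqrt of eigenvalues) *)
Definition trnorm m n (X : 'M[C]_(m, n)) : C :=
  \sum_(i < n) sqrtC (spectral_diag (adjmx X *m X) 0 i).

Definition meas_channel d k (M : 'I_k -> 'M[C]_d) (rho : 'M[C]_d) : 'M[C]_k :=
  \sum_(i < k) (\tr (rho *m M i)) *: delta_mx i i.

Definition map_diff d k (S T : 'M[C]_d -> 'M[C]_k) : 'M[C]_d -> 'M[C]_k :=
  fun rho => S rho - T rho.

Definition choi d k (S : 'M[C]_d -> 'M[C]_k) : 'M[C]_(k * d) :=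
  \sum_(i < d) \sum_(j < d) (S (delta_mx i j) *t delta_mx i j).

Definition ME_norm d k (S : 'M[C]_d -> 'M[C]_k) : C :=
  trnorm ((d%:R)^-1 *: choi S).

(* (S (x) I_{A'}) rho  for rho on C^d (x) C^n  (tensor index via mxtens_index) *)
Definition ext_apply d k n (S : 'M[C]_d -> 'M[C]_k) (rho : 'M[C]_(d * n))
  : 'M[C]_(k * n) :=
  \sum_(i < d) \sum_(j < d) \sum_(a < n) \sum_(b < n)
     rho (mxtens_index (i, a)) (mxtens_index (j, b))
       *: (S (delta_mx i j) *t delta_mx a b).

Definition is_diamond_norm d k (S : 'M[C]_d -> 'M[C]_k) (t : C) : Prop :=
  (forall n (rho : 'M[C]_(d * n)), density rho -> trnorm (ext_apply S rho) <= t)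
  /\ (exists n (rho : 'M[C]_(d * n)), density rho /\ trnorm (ext_apply S rho) = t).

Definition MEWC d k (M N : 'I_k -> 'M[C]_d) : Prop :=
  let Delta := map_diff (meas_channel M) (meas_channel N) in
  is_diamond_norm Delta (d%:R * ME_norm Delta).

End QInfo.

(* Main.v *)
Require Import Defs.
From HB Require Import structures.
From mathcomp Require Import all_boot all_order all_algebra.
From mathcomp Require Import sesquilinear spectral mxtens.
From mathcomp Require Import ring.
Import Order.TTheory GRing.Theory Num.Theory.
Local Open Scope ring_scope.
Local Open Scope sesquilinear_scope.

Set Implicit Arguments.
Unset Strict Implicit.
Section S.
Variable C : numClosedFieldType.
Implicit Types (n : nat).

Lemma adjmxE m n (A : 'M[C]_(m,n)) : adjmx A = A ^t*.
Proof. by []. Qed.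

Definition herm n (A : 'M[C]_n) := A ^t* = A.
Arguments herm {n}.

Lemma adj_add m n (A B : 'M[C]_(m,n)) : (A + B)^t* = A^t* + B^t*.
Proof. by rewrite linearD /= map_mxD. Qed.

Lemma adj_scale m n c (A : 'M[C]_(m,n)) : (c *: A)^t* = c^* *: A^t*.
Proof. by apply/matrixP => i j; rewrite !mxE rmorphM. Qed.

Lemma adj_mul m n p (A : 'M[C]_(m,n)) (B : 'M[C]_(n,p)) : (A *m B)^t* = B^t* *m A^t*.
Proof. by rewrite trmx_mul map_mxM. Qed.

Lemma sum_pair m n (F : 'I_(m * n) -> C) :
  \sum_p F p = \sum_(i < m) \sum_(j < n) F (mxtens_index (i, j)).
Proof.
rewrite pair_big /=.
rewrite (reindex (@mxtens_index m n)) /=; last first.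
  by exists (@mxtens_unindex m n) => x _; [exact: mxtens_indexK|exact: mxtens_unindexK].
by apply: eq_bigr => -[i j].
Qed.

Lemma sum_delta n (F : 'I_n -> C) a : \sum_(b < n) F b * (a == b)%:R = F a.
Proof.
rewrite (bigD1 a) //= eqxx mulr1 big1 ?addr0 // => b /negbTE.
by rewrite eq_sym => ->; rewrite mulr0.
Qed.

Lemma sum_delta' n (F : 'I_n -> C) a : \sum_(b < n) F b * (b == a)%:R = F a.
Proof. by rewrite -(sum_delta F a); apply: eq_bigr => b _; rewrite eq_sym. Qed.

Lemma quad_delta n (A : 'M[C]_n) i j :
  ((delta_mx i 0 : 'cV[C]_n)^t* *m A *m (delta_mx j 0 : 'cV[C]_n)) 0 0 = A i j.
Proof.
have -> : (delta_mx i 0 : 'cV[C]_n)^t* = delta_mx 0 i.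
  by apply/matrixP => a b; rewrite !mxE conjC_nat andbC.
by rewrite -rowE -colE !mxE.
Qed.


Definition qf n (A : 'M[C]_n) (v w : 'cV[C]_n) := (v^t* *m A *m w) 0 0.
Arguments qf {n}.

Lemma qfD n (A : 'M[C]_n) v1 v2 w1 w2 :
  qf A (v1 + v2) (w1 + w2) = qf A v1 w1 + qf A v1 w2 + qf A v2 w1 + qf A v2 w2.
Proof. by rewrite /qf adj_add !mulmxDl !mulmxDr !mxE !addrA. Qed.

Lemma qfZl n (A : 'M[C]_n) c v w : qf A (c *: v) w = c^* * qf A v w.
Proof. by rewrite /qf adj_scale -!scalemxAl !mxE. Qed.

Lemma qfZr n (A : 'M[C]_n) c v w : qf A v (c *: w) = c * qf A v w.
Proof. by rewrite /qf -scalemxAr !mxE. Qed.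

Lemma psd_herm n (A : 'M[C]_n) : psd A -> herm A.
Proof.
move=> hA.
have fr v : (qf A v v)^* = qf A v v by exact: geC0_conj (hA v).
apply/matrixP => i j; rewrite !mxE.
pose ei : 'cV[C]_n := delta_mx i 0; pose ej : 'cV[C]_n := delta_mx j 0.
have hp : qf A ei ej = A i j by exact: quad_delta.
have hq : qf A ej ei = A j i by exact: quad_delta.
have h1 := fr (ei + ej).
rewrite qfD !rmorphD /= !fr hp hq in h1.
have h2 := fr (ei + 'i *: ej).
rewrite qfD !qfZl !qfZr !rmorphD !rmorphM /= !fr hp hq conjCi in h2.
have hii : (qf A ej ej)^* = qf A ej ej by apply: fr.
rewrite rmorphN /= conjCi opprK in h2.
set p := A i j in h1 h2 *; set q := A j i in h1 h2 *.
set a := qf A ei ei in h1 h2; set b := qf A ej ej in h1 h2 hii.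
have E1 : p^* + q^* = p + q.
  apply/eqP; rewrite -subr_eq0; apply/eqP.
  transitivity ((a + p^* + q^* + b) - (a + p + q + b)); first by ring.
  by rewrite h1 subrr.
have E2 : 'i * (q^* - p^* - (p - q)) = 0.
  transitivity ((a + - 'i * p^* + 'i * q^* + 'i * (- 'i * b)) - (a + 'i * p + - 'i * q + - 'i * ('i * b))); first by ring.
  by rewrite h2 subrr.
move/eqP: E2; rewrite mulf_eq0 (negbTE (neq0Ci _)) /= => /eqP E2.
apply/eqP; rewrite -subr_eq0; apply/eqP.
have : (p^* + q^* - (p + q)) + (q^* - p^* - (p - q)) = 0 by rewrite E2 E1 subrr addr0.
move=> h; transitivity ((p^* + q^* - (p + q) + (q^* - p^* - (p - q))) / 2).
  by field.
by rewrite h mul0r.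
Qed.


Lemma char_poly_sim n (Q' Q : 'M[C]_n) (e : 'rV[C]_n) : Q' *m Q = 1%:M ->
  char_poly (Q' *m diag_mx e *m Q) = \prod_(i < n) ('X - (e 0 i)%:P).
Proof.
move=> hQ; rewrite /char_poly.
have -> : char_poly_mx (Q' *m diag_mx e *m Q) =
   map_mx polyC Q' *m char_poly_mx (diag_mx e) *m map_mx polyC Q.
  rewrite /char_poly_mx mulmxBr mulmxBl !map_mxM.
  congr (_ - _); rewrite scalar_mxC -mulmxA -map_mxM hQ.
  by rewrite map_mx1 mulmx1.
rewrite !det_mulmx mulrAC -det_mulmx -map_mxM hQ map_mx1 det1 mul1r.
rewrite -/(char_poly _) char_poly_trig ?diag_mx_is_trig //.
by apply: eq_bigr => i _; rewrite mxE eqxx mulr1n.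
Qed.

Lemma eig_sum n (A : 'M[C]_n) (Q' Q : 'M[C]_n) (e : 'rV[C]_n) (f : C -> C) :
  A \is normalmx -> Q' *m Q = 1%:M -> A = Q' *m diag_mx e *m Q ->
  \sum_i f (spectral_diag A 0 i) = \sum_i f (e 0 i).
Proof.
move=> /orthomx_spectralP hA hQ hAe.
have hP : invmx (spectralmx A) *m spectralmx A = 1%:M by rewrite mulVmx ?spectral_unit.
have := @char_poly_sim n _ _ (spectral_diag A) hP; rewrite -hA {1}hAe char_poly_sim //.
move=> heq.
have hperm : perm_eq [seq e 0 i | i <- index_enum 'I_n] [seq spectral_diag A 0 i | i <- index_enum 'I_n].
  by apply: prod_XsubC_eq; rewrite !big_map heq.
rewrite -(big_map (fun i => spectral_diag A 0 i) xpredT f).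
rewrite -(big_map (fun i => e 0 i) xpredT f).
by apply/esym/perm_big.
Qed.


Lemma diag_mul n (d e : 'rV[C]_n) :
  diag_mx d *m diag_mx e = diag_mx (\row_i (d 0 i * e 0 i)).
Proof.
apply/matrixP => i j; rewrite mul_diag_mx !mxE.
by case: eqP => [->|]; rewrite ?mulr1n ?mulr0n ?mulr0.
Qed.

Lemma adj_diag n (d : 'rV[C]_n) : (diag_mx d)^t* = diag_mx (\row_i (d 0 i)^*).
Proof.
apply/matrixP => i j; rewrite !mxE eq_sym.
by case: eqP => [->|]; rewrite ?mulr1n ?mulr0n ?conjC0.
Qed.

Lemma herm_normal n (A : 'M[C]_n) : herm A -> A \is normalmx.
Proof. by move=> hA; apply/normalmxP; rewrite hA. Qed.

Lemma trnorm_nf n (A P : 'M[C]_n) (y : 'rV[C]_n) : P \is unitarymx ->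
  A = P^t* *m diag_mx y *m P -> trnorm A = \sum_i `|y 0 i|.
Proof.
move=> /unitarymxP hPP hA.
have hPP' : P^t* *m P = 1%:M by apply: mulmx1C.
have hAA : adjmx A *m A = P^t* *m diag_mx (\row_i ((y 0 i)^* * y 0 i)) *m P.
  rewrite adjmxE hA !adj_mul trmxCK adj_diag.
  rewrite -!mulmxA; congr (_ *m _); rewrite !mulmxA.
  rewrite -(mulmxA _ P) hPP mulmx1 diag_mul; congr (diag_mx _ *m _).
  by apply/matrixP => i j; rewrite !mxE.
rewrite /trnorm (@eig_sum _ _ _ _ _ sqrtC _ hPP' hAA).
  by apply: eq_bigr => i _; rewrite mxE normC_def mulrC.
by apply: herm_normal; rewrite /herm !adjmxE adj_mul trmxCK.
Qed.


Lemma mxtens_eq m n (i k : 'I_m) (j l : 'I_n) :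
  (mxtens_index (i, j) == mxtens_index (k, l)) = (i == k) && (j == l).
Proof. by rewrite (can_eq (@mxtens_indexK m n)) xpair_eqE. Qed.

Lemma tens11 m n : (1%:M : 'M[C]_m) *t (1%:M : 'M[C]_n) = 1%:M.
Proof.
apply/matrixP => p q.
case: (mxtens_indexP p) => i j; case: (mxtens_indexP q) => k l.
rewrite tensmxE !mxE mxtens_eq.
by case: (i == k); case: (j == l); rewrite ?mulr1 ?mulr0.
Qed.

Lemma tens_diag m n (a : 'rV[C]_m) (b : 'rV[C]_n) :
  diag_mx a *t diag_mx b =
  diag_mx (\row_p (a 0 (mxtens_unindex p).1 * b 0 (mxtens_unindex p).2)).
Proof.
apply/matrixP => p q.
case: (mxtens_indexP p) => i j; case: (mxtens_indexP q) => k l.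
rewrite tensmxE !mxE mxtens_eq !mxtens_indexK /=.
by case: (i == k); case: (j == l); rewrite ?mulr1n ?mulr0n ?mulr0 ?mul0r.
Qed.

Lemma adj_tens m n p q (A : 'M[C]_(m,n)) (B : 'M[C]_(p,q)) : (A *t B)^t* = A^t* *t B^t*.
Proof. by rewrite trmx_tens map_mxT. Qed.

Lemma trnorm_tens_diag m n (a : 'rV[C]_m) (X P : 'M[C]_n) (y : 'rV[C]_n) :
  P \is unitarymx -> X = P^t* *m diag_mx y *m P ->
  trnorm (diag_mx a *t X) = (\sum_i `|a 0 i|) * \sum_i `|y 0 i|.
Proof.
move=> hP hX.
have hU : (1%:M *t P : 'M[C]_(m * n)) \is unitarymx.
  apply/unitarymxP; rewrite adj_tens tensmx_mul.
  by move/unitarymxP: hP => ->; rewrite trmx1 map_mx1 mulmx1 tens11.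
rewrite (@trnorm_nf _ _ _ (\row_p (a 0 (mxtens_unindex p).1 * y 0 (mxtens_unindex p).2)) hU).
  rewrite sum_pair mulr_suml; apply: eq_bigr => i _.
  rewrite mulr_sumr; apply: eq_bigr => j _.
  by rewrite mxE mxtens_indexK normrM.
rewrite -tens_diag adj_tens trmx1 map_mx1 !tensmx_mul mul1mx mulmx1 hX.
done.
Qed.


Lemma psd_conj_diag n (X P : 'M[C]_n) i : psd X -> 0 <= (P *m X *m P^t*) i i.
Proof.
move=> hX; have := hX ((row i P)^t*); rewrite adjmxE trmxCK.
congr (_ <= _).
by rewrite tr_row map_col colE !mulmxA -colE -!row_mul !mxE.
Qed.

Lemma psd_tr_ge0 n (X : 'M[C]_n) : psd X -> 0 <= \tr X.
Proof.
move=> hX; rewrite /mxtrace; apply: sumr_ge0 => i _.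
by rewrite -quad_delta; apply: hX.
Qed.

Lemma nf_bound n K (P : 'M[C]_n) (y : 'rV[C]_n) (lam : 'I_K -> C) (X : 'I_K -> 'M[C]_n) :
  P \is unitarymx -> (forall k, psd (X k)) ->
  P^t* *m diag_mx y *m P = \sum_k lam k *: X k ->
  \sum_i `|y 0 i| <= \sum_k `|lam k| * \tr (X k).
Proof.
move=> /unitarymxP hPP hX hY.
pose c k i := (P *m X k *m P^t*) i i.
have c_ge0 k i : 0 <= c k i by apply: psd_conj_diag.
have c_sum k : \sum_i c k i = \tr (X k).
  rewrite -/(mxtrace _) mxtrace_mulC mulmxA.
  by rewrite (mulmx1C hPP) mul1mx.
have hy i : y 0 i = \sum_k lam k * c k i.
  have : P *m (P^t* *m diag_mx y *m P) *m P^t* = diag_mx y.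
    by rewrite !mulmxA hPP mul1mx -mulmxA hPP mulmx1.
  rewrite hY mulmx_sumr mulmx_suml => /matrixP /(_ i i).
  rewrite !mxE eqxx mulr1n summxE => <-; apply: eq_bigr => k _.
  by rewrite -scalemxAr -scalemxAl mxE.
pose s i := if y 0 i == 0 then 0 else `|y 0 i| / y 0 i.
have hs i : s i * y 0 i = `|y 0 i|.
  rewrite /s; case: eqP => [->|/eqP h]; first by rewrite mul0r normr0.
  by rewrite mulfVK.
have hs1 i : `|s i| <= 1.
  rewrite /s; case: eqP => [_|/eqP h]; first by rewrite normr0 ler01.
  by rewrite normf_div normr_id divff ?normr_eq0.
have E : \sum_i `|y 0 i| = \sum_k lam k * \sum_i s i * c k i.
  transitivity (\sum_i s i * y 0 i); first by apply: eq_bigr => i _; rewrite hs.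
  rewrite (eq_bigr (fun i => \sum_k s i * (lam k * c k i))); last first.
    by move=> i _; rewrite hy mulr_sumr.
  rewrite exchange_big; apply: eq_bigr => k _; rewrite mulr_sumr.
  by apply: eq_bigr => i _; rewrite mulrCA.
rewrite -[X in X <= _]ger0_norm ?sumr_ge0 // E.
apply: le_trans (ler_norm_sum _ _ _) _; apply: ler_sum => k _.
rewrite normrM; apply: ler_wpM2l; first exact: normr_ge0.
rewrite -c_sum; apply: le_trans (ler_norm_sum _ _ _) _; apply: ler_sum => i _.
rewrite normrM (ger0_norm (c_ge0 k i)) -[X in _ <= X]mul1r.
by apply: ler_wpM2r; [exact: c_ge0|exact: hs1].
Qed.


Lemma herm_nf n (Y : 'M[C]_n) : herm Y ->
  exists P (y : 'rV[C]_n), P \is unitarymx /\ Y = P^t* *m diag_mx y *m P.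
Proof.
move=> hY; have /orthomx_spectralP h := herm_normal hY.
exists (spectralmx Y), (spectral_diag Y); split; first exact: spectral_unitarymx.
by rewrite {1}h invmx_unitary ?spectral_unitarymx.
Qed.

Lemma adj_sum n K (F : 'I_K -> 'M[C]_n) : (\sum_k F k)^t* = \sum_k (F k)^t*.
Proof.
apply: (big_morph (fun A : 'M[C]_n => A^t*)) => [A B|]; first exact: adj_add.
by rewrite trmx0 map_mx0.
Qed.

Lemma herm_comb n K (lam : 'I_K -> C) (X : 'I_K -> 'M[C]_n) :
  (forall k, lam k \is Num.real) -> (forall k, herm (X k)) ->
  herm (\sum_k lam k *: X k).
Proof.
move=> hl hX; rewrite /herm adj_sum; apply: eq_bigr => k _.
by rewrite adj_scale (conj_Creal (hl k)) hX.
Qed.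

Lemma tr_delta_mul n (A : 'M[C]_n) i j : \tr (delta_mx i j *m A) = A j i.
Proof.
rewrite -(mul_delta_mx (0 : 'I_1)) -mulmxA mxtrace_mulC.
rewrite /mxtrace big_ord1 -rowE -colE !mxE.
done.
Qed.

Definition Zm : 'M[C]_2 := diag_mx (\row_(i < 2) (-1) ^+ i).

Lemma sum_Zm : \sum_(i < 2) `|(\row_(i < 2) ((-1) ^+ i : C)) 0 i| = 2.
Proof. by rewrite !big_ord_recl big_ord0 !mxE /= expr0 expr1 normrN normr1 addr0. Qed.

Lemma Delta_E (M N : 'I_2 -> 'M[C]_2) i j :
  \sum_(k < 2) M k = 1%:M -> \sum_(k < 2) N k = 1%:M ->
  map_diff (meas_channel M) (meas_channel N) (delta_mx i j) = (M 0 - N 0) j i *: Zm.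
Proof.
rewrite !big_ord_recl !big_ord0 !addr0 => hM hN.
rewrite /map_diff /meas_channel !big_ord_recl !big_ord0 !addr0 !tr_delta_mul.
have -> : M (lift ord0 ord0) = 1%:M - M ord0 by rewrite -hM addrC addKr.
have -> : N (lift ord0 ord0) = 1%:M - N ord0 by rewrite -hN addrC addKr.
apply/matrixP => a b; rewrite !mxE.
case: a => [[|[|//]] ha]; case: b => [[|[|//]] hb] /=;
  rewrite ?mulr1n ?mulr0n ?expr0 ?expr1; ring.
Qed.


Lemma sum2_delta n (F : 'I_n -> 'I_n -> C) a' b' :
  \sum_(a < n) \sum_(b < n) F a b * ((a' == a) && (b' == b))%:R = F a' b'.
Proof.
rewrite -(sum_delta (fun a => F a b') a'); apply: eq_bigr => a _.
rewrite -(sum_delta (fun b => F a b * (a' == a)%:R) b'); apply: eq_bigr => b _.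
by rewrite -mulnb natrM mulrA.
Qed.

Definition Xr n (D : 'M[C]_2) (rho : 'M[C]_(2 * n)) : 'M[C]_n :=
  \matrix_(a, b) \sum_(i < 2) \sum_(j < 2)
     rho (mxtens_index (i, a)) (mxtens_index (j, b)) * D j i.

Lemma ext_E (M N : 'I_2 -> 'M[C]_2) n (rho : 'M[C]_(2 * n)) :
  \sum_(k < 2) M k = 1%:M -> \sum_(k < 2) N k = 1%:M ->
  ext_apply (map_diff (meas_channel M) (meas_channel N)) rho = Zm *t Xr (M 0 - N 0) rho.
Proof.
move=> hM hN; rewrite /ext_apply.
apply/matrixP => p q.
case: (mxtens_indexP p) => k a'; case: (mxtens_indexP q) => l b'.
rewrite tensmxE !summxE mxE.
under eq_bigr => i _ do rewrite summxE.
under eq_bigr => i _ do under eq_bigr => j _ do rewrite summxE.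
under eq_bigr => i _ do under eq_bigr => j _ do under eq_bigr => a _ do rewrite summxE.
under eq_bigr => i _ do under eq_bigr => j _ do under eq_bigr => a _ do under eq_bigr => b _ do
  rewrite mxE Delta_E // tensmxE !mxE.
rewrite !mxE mulr_sumr; apply: eq_bigr => i _; rewrite mulr_sumr; apply: eq_bigr => j _.
under eq_bigr => a _ do under eq_bigr => b _ do rewrite mulrA.
rewrite (sum2_delta (fun a b => rho (mxtens_index (i, a)) (mxtens_index (j, b)) *
   ((M 0 j i - N 0 j i) * ((-1) ^+ k *+ (k == l))))).
by rewrite [(M 0 - N 0) j i]mxE [in RHS]mxE; ring.
Qed.


Lemma sum2_delta' n (F : 'I_n -> 'I_n -> C) a' b' :
  \sum_(a < n) \sum_(b < n) F a b * ((a == a') && (b == b'))%:R = F a' b'.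
Proof.
rewrite -(sum2_delta F a' b'); apply: eq_bigr => a _; apply: eq_bigr => b _.
by rewrite (eq_sym a) (eq_sym b).
Qed.

Lemma choi_E (M N : 'I_2 -> 'M[C]_2) :
  \sum_(k < 2) M k = 1%:M -> \sum_(k < 2) N k = 1%:M ->
  choi (map_diff (meas_channel M) (meas_channel N)) = Zm *t (M 0 - N 0)^T.
Proof.
move=> hM hN; rewrite /choi.
apply/matrixP => p q.
case: (mxtens_indexP p) => k a'; case: (mxtens_indexP q) => l b'.
rewrite tensmxE !summxE.
under eq_bigr => i _ do rewrite summxE.
under eq_bigr => i _ do under eq_bigr => j _ do rewrite Delta_E // tensmxE !mxE.
rewrite (sum2_delta (fun i j => (M 0 j i - N 0 j i) * ((-1) ^+ k *+ (k == l)))).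
by rewrite /Zm !mxE mulrC.
Qed.

Lemma diamond_uniq d k (S : 'M[C]_d -> 'M[C]_k) t1 t2 :
  is_diamond_norm S t1 -> is_diamond_norm S t2 -> t1 = t2.
Proof.
move=> [h1 [n1 [r1 [d1 e1]]]] [h2 [n2 [r2 [d2 e2]]]].
apply/le_anti; apply/andP; split.
  by rewrite -e1; apply: h2.
by rewrite -e2; apply: h1.
Qed.

Lemma psd_conj m n (V : 'M[C]_(m, n)) (rho : 'M[C]_m) : psd rho -> psd (V^t* *m rho *m V).
Proof.
move=> h v; have := h (V *m v).
by rewrite !adjmxE adj_mul !mulmxA.
Qed.

Lemma psd_rank1 m (u : 'cV[C]_m) : psd (u *m u^t*).
Proof.
move=> w; rewrite adjmxE.
have -> : w^t* *m (u *m u^t*) *m w = (w^t* *m u) *m (w^t* *m u)^t*.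
  by rewrite adj_mul trmxCK !mulmxA.
rewrite mxE big_ord1.
set B := w ^t* *m u.
have -> : (B ^t*) ord0 0 = (B 0 ord0)^* by rewrite !mxE.
exact: mul_conjC_ge0.
Qed.


Definition Vk n (P : 'M[C]_2) (k : 'I_2) : 'M[C]_(2 * n, n) :=
  \matrix_(p, b) ((P k (mxtens_unindex p).1)^* * ((mxtens_unindex p).2 == b)%:R).

Lemma Vk_entry n P k (rho : 'M[C]_(2 * n)) a b :
  ((Vk n P k)^t* *m rho *m Vk n P k) a b =
  \sum_(i < 2) \sum_(j < 2) rho (mxtens_index (i, a)) (mxtens_index (j, b)) * (P k i * (P k j)^*).
Proof.
rewrite mxE sum_pair.
under eq_bigr => j _ do under eq_bigr => b' _ do rewrite mxE sum_pair [Vk _ _ _ _ _]mxE mxtens_indexK /=.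
under eq_bigr => j _ do under eq_bigr => b' _ do under eq_bigr => i _ do under eq_bigr => a' _ do
  rewrite !mxE mxtens_indexK /= rmorphM /= conjCK conjC_nat.
under eq_bigr => j _ do under eq_bigr => b' _ do under eq_bigr => i _ do under eq_bigr => a' _ do rewrite mulrAC.
under eq_bigr => j _ do under eq_bigr => b' _ do under eq_bigr => i _ do rewrite sum_delta'.
under eq_bigr => j _ do under eq_bigr => b' _ do rewrite mulrA.
under eq_bigr => j _ do rewrite sum_delta'.
rewrite exchange_big; apply: eq_bigr => i _.
rewrite mulr_suml; apply: eq_bigr => j _.
by rewrite mulrA [P k j * _]mulrC.
Qed.


Lemma nf_entry n (P : 'M[C]_n) (lam : 'rV[C]_n) j i :
  (P^t* *m diag_mx lam *m P) j i = \sum_k (P k j)^* * lam 0 k * P k i.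
Proof. by rewrite mxE; apply: eq_bigr => k _; rewrite mul_mx_diag !mxE. Qed.

Lemma Xr_decomp n (P : 'M[C]_2) (lam : 'rV[C]_2) (rho : 'M[C]_(2 * n)) :
  Xr (P^t* *m diag_mx lam *m P) rho =
  \sum_k lam 0 k *: ((Vk n P k)^t* *m rho *m Vk n P k).
Proof.
apply/matrixP => a b; rewrite summxE mxE.
under [RHS]eq_bigr => k _ do rewrite mxE Vk_entry mulr_sumr.
rewrite [RHS]exchange_big; apply: eq_bigr => i _.
under [RHS]eq_bigr => k _ do rewrite mulr_sumr.
rewrite [RHS]exchange_big; apply: eq_bigr => j _.
rewrite nf_entry mulr_sumr; apply: eq_bigr => k _.
ring.
Qed.


Lemma Vk_trsum n (P : 'M[C]_2) (rho : 'M[C]_(2 * n)) : P \is unitarymx ->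
  \sum_k \tr ((Vk n P k)^t* *m rho *m Vk n P k) = \tr rho.
Proof.
move=> /unitarymxP hPP; have hP : P^t* *m P = 1%:M by apply: mulmx1C.
have hPe i j : \sum_k P k i * (P k j)^* = (j == i)%:R.
  have /matrixP /(_ j i) := hP; rewrite !mxE => <-.
  by apply: eq_bigr => k _; rewrite !mxE mulrC.
rewrite /mxtrace [RHS]sum_pair [RHS]exchange_big [LHS]exchange_big.
apply: eq_bigr => a _ /=.
under eq_bigr => k _ do rewrite Vk_entry.
rewrite [LHS]exchange_big; apply: eq_bigr => i _ /=.
rewrite [LHS]exchange_big /=.
rewrite -[RHS](sum_delta' (fun j => rho (mxtens_index (i, a)) (mxtens_index (j, a))) i).
apply: eq_bigr => j _.
by rewrite -hPe mulr_sumr.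
Qed.


Lemma upper_bound (M N : 'I_2 -> 'M[C]_2) (P : 'M[C]_2) (lam : 'rV[C]_2) (m : C) n
    (rho : 'M[C]_(2 * n)) :
  \sum_(k < 2) M k = 1%:M -> \sum_(k < 2) N k = 1%:M ->
  P \is unitarymx -> M 0 - N 0 = P^t* *m diag_mx lam *m P ->
  (forall k, lam 0 k \is Num.real) -> (forall k, `|lam 0 k| <= m) ->
  density rho ->
  trnorm (ext_apply (map_diff (meas_channel M) (meas_channel N)) rho) <= 2 * m.
Proof.
move=> hM hN hP hD hreal hm [hrho htr].
rewrite ext_E // hD Xr_decomp.
have hXk k : psd ((Vk n P k)^t* *m rho *m Vk n P k) by apply: psd_conj.
have hX := herm_comb hreal (fun k => psd_herm (hXk k)).
have [Q [y [hQ hXQ]]] := herm_nf hX.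
rewrite /Zm (trnorm_tens_diag _ hQ hXQ) sum_Zm.
apply: ler_wpM2l; first by rewrite ler0n.
apply: le_trans (nf_bound hQ hXk (esym hXQ)) _.
rewrite -[X in _ <= X]mulr1 -htr -(Vk_trsum _ hP) mulr_sumr.
apply: ler_sum => k _; apply: ler_wpM2r; first exact: psd_tr_ge0.
exact: hm.
Qed.


Lemma attain (M N : 'I_2 -> 'M[C]_2) (P : 'M[C]_2) (lam : 'rV[C]_2) k :
  \sum_(k < 2) M k = 1%:M -> \sum_(k < 2) N k = 1%:M ->
  P \is unitarymx -> M 0 - N 0 = P^t* *m diag_mx lam *m P ->
  exists n (rho : 'M[C]_(2 * n)), density rho /\
  trnorm (ext_apply (map_diff (meas_channel M) (meas_channel N)) rho) = 2 * `|lam 0 k|.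
Proof.
move=> hM hN hP hD.
have hPP : P *m P^t* = 1%:M by apply/unitarymxP.
have hdiag : P *m (M 0 - N 0) *m P^t* = diag_mx lam.
  by rewrite hD !mulmxA hPP mul1mx -mulmxA hPP mulmx1.
pose u : 'cV[C]_(2 * 1) := \col_p (P k (mxtens_unindex p).1)^*.
exists 1%N, (u *m u^t*); split; first split.
- exact: psd_rank1.
- rewrite mxtrace_mulC /mxtrace big_ord1 mxE sum_pair.
  have /matrixP /(_ k k) := hPP; rewrite !mxE eqxx mulr1n => <-.
  apply: eq_bigr => i _; rewrite big_ord1 !mxE mxtens_indexK /= conjCK mulrC.
  done.
have h1 : (1%:M : 'M[C]_1) \is unitarymx by apply/unitarymxP; rewrite trmx1 map_mx1 mulmx1.
have hX : Xr (M 0 - N 0) (u *m u^t*) = (1%:M)^t* *m diag_mx (\row_(a < 1) lam 0 k) *m 1%:M.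
  rewrite trmx1 map_mx1 mul1mx mulmx1.
  apply/matrixP => a b; rewrite [a]ord1 [b]ord1 !mxE eqxx mulr1n.
  have /matrixP /(_ k k) := hdiag; rewrite !mxE eqxx mulr1n => <-.
  under eq_bigr => i _ do under eq_bigr => j _ do rewrite !mxE big_ord1 !mxE !mxtens_indexK /= conjCK.
  under [RHS]eq_bigr => i _ do rewrite mxE mulr_suml.
  apply: eq_bigr => i _; apply: eq_bigr => j _.
  by rewrite !mxE; ring.
rewrite ext_E // /Zm (trnorm_tens_diag _ h1 hX) sum_Zm big_ord1 mxE.
done.
Qed.


Lemma ME_value (M N : 'I_2 -> 'M[C]_2) (P : 'M[C]_2) (lam : 'rV[C]_2) :
  \sum_(k < 2) M k = 1%:M -> \sum_(k < 2) N k = 1%:M ->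
  P \is unitarymx -> M 0 - N 0 = P^t* *m diag_mx lam *m P ->
  2%:R * ME_norm (map_diff (meas_channel M) (meas_channel N)) =
  2 * (`|lam 0 0| + `|lam 0 1|).
Proof.
move=> hM hN hP hD.
rewrite /ME_norm choi_E //.
have -> : (2%:R)^-1 *: (Zm *t (M 0 - N 0)^T) = Zm *t ((2%:R)^-1 *: (M 0 - N 0)^T).
  apply/matrixP => p q; rewrite !mxE; ring.
have hQ : map_mx Num.conj P \is unitarymx by rewrite conjC_unitary.
have hX : (2%:R)^-1 *: (M 0 - N 0)^T =
    (map_mx Num.conj P)^t* *m diag_mx (\row_i ((2%:R)^-1 * lam 0 i)) *m map_mx Num.conj P.
  apply/matrixP => a b; rewrite nf_entry mxE [(M 0 - N 0)^T a b]mxE hD nf_entry mulr_sumr.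
  by apply: eq_bigr => k _; rewrite !mxE conjCK; ring.
rewrite /Zm (trnorm_tens_diag _ hQ hX) sum_Zm !big_ord_recl big_ord0 !mxE !normrM.
rewrite (ger0_norm (_ : 0 <= (2%:R : C)^-1)); last by rewrite invr_ge0 ler0n.
rewrite addr0 /=.
have -> : (lift ord0 ord0 : 'I_2) = 1 by apply: val_inj.
have -> : (ord0 : 'I_2) = 0 by apply: val_inj.
by field.
Qed.


Lemma ord2_cases (k : 'I_2) : k = 0 \/ k = 1.
Proof.
case: k => [[|[|//]] hk]; [left|right]; exact: val_inj.
Qed.

Lemma key_eq (x y : C) :
  (2 * (`|x| + `|y|) = 2 * (if `|x| <= `|y| then `|y| else `|x|)) <-> x * y = 0.
Proof.
have e a b : (2 * (a + b) = 2 * b :> C) <-> a = 0.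
  split => [h|->]; last by rewrite add0r.
  have : 2 * a = 0.
    by transitivity (2 * (a + b) - 2 * b); [ring | rewrite h subrr].
  by move/eqP; rewrite mulf_eq0 pnatr_eq0 /= => /eqP.
have e' a b : (2 * (a + b) = 2 * a :> C) <-> b = 0 by rewrite addrC; apply: e.
case: ifP => h.
  rewrite e; split => [/eqP|]; first by rewrite normr_eq0 => /eqP ->; rewrite mul0r.
  move/eqP; rewrite mulf_eq0 => /orP[/eqP->|/eqP y0]; first by rewrite normr0.
  by move: h; rewrite y0 normr0 normr_le0 => /eqP ->; rewrite normr0.
rewrite e'; split => [/eqP|]; first by rewrite normr_eq0 => /eqP ->; rewrite mulr0.
move/eqP; rewrite mulf_eq0 => /orP[/eqP x0|/eqP->]; last by rewrite normr0.
by move: h; rewrite x0 normr0 normr_ge0.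
Qed.

End S.

Unset Implicit Arguments.

Theorem corollary2 (C : numClosedFieldType) (M N : 'I_2 -> 'M[C]_2) :
  POVM M -> POVM N -> M 1 != N 1 ->
  (MEWC M N <-> \det (M 0 - N 0) = 0).
Proof.
move=> [hMp hM] [hNp hN] _.
have hDh : herm (M 0 - N 0).
  rewrite /herm; have -> : (M 0 - N 0)^t* = (M 0)^t* - (N 0)^t*.
    by apply/matrixP => i j; rewrite !mxE rmorphB.
  by rewrite (psd_herm (hMp 0)) (psd_herm (hNp 0)).
have [P [lam [hP hD]]] := herm_nf hDh.
have hPP : P *m P^t* = 1%:M by apply/unitarymxP.
have hdiag : P *m (M 0 - N 0) *m P^t* = diag_mx lam.
  by rewrite hD !mulmxA hPP mul1mx -mulmxA hPP mulmx1.
have hreal k : lam 0 k \is Num.real.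
  have : (diag_mx lam)^t* = diag_mx lam.
    by rewrite -hdiag !adj_mul trmxCK hDh mulmxA.
  by move/matrixP/(_ k k); rewrite !mxE eqxx mulr1n => /CrealP.
pose kk : 'I_2 := if `|lam 0 0| <= `|lam 0 1| then 1 else 0.
have hm k : `|lam 0 k| <= `|lam 0 kk|.
  rewrite /kk; case: ifP => h; case: (ord2_cases k) => ->; rewrite ?lexx //.
  have := real_leVge (normr_real (lam 0 0)) (normr_real (lam 0 1)).
  by rewrite h.
have hdia : is_diamond_norm (map_diff (meas_channel M) (meas_channel N)) (2 * `|lam 0 kk|).
  rewrite /is_diamond_norm; split.
    by move=> n rho hrho; apply: upper_bound hM hN hP hD hreal hm hrho.
  exact: (attain _ hM hN hP hD).
have hdet : \det (M 0 - N 0) = lam 0 0 * lam 0 1.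
  rewrite hD !det_mulmx mulrAC -det_mulmx (mulmx1C hPP) det1 mul1r det_diag.
  rewrite !big_ord_recl big_ord0 mulr1 /=.
  have -> : (lift ord0 ord0 : 'I_2) = 1 by apply: val_inj.
  by have -> : (ord0 : 'I_2) = 0 by apply: val_inj.
rewrite /MEWC /= (ME_value hM hN hP hD) hdet -key_eq.
have -> : (if `|lam 0 0| <= `|lam 0 1| then `|lam 0 1| else `|lam 0 0|) = `|lam 0 kk|.
  by rewrite /kk; case: ifP.
split => [h|->//]; exact: diamond_uniq h hdia.
Qed.
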